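(* Let $M$ be a gasket automaton satisfying the $\gamma$-isolated condition with $\mathcal P_{\alpha\gamma}\cup\mathcal P_{\beta\gamma}\ne\emptyset$. Then there exists $(\tau,\kappa)\in\mathcal P_{\alpha\gamma}\cup\mathcal P_{\beta\gamma}$ such that $\kappa$ is double-maximal, i.e. $\kappa$ is both $\alpha\gamma$-maximal and $\beta\gamma$-maximal.
   Context: $\Sigma=\{1,\dots,N\}$. Triangle automaton: $\alpha,\beta,\gamma$ distinct elements of $\Sigma\cup\{-1,-2,-3\}$; states $S_{uv}$ ($u\ne v\in\{\alpha,\beta,\gamma\}$), $Id$, $Exit$; input alphabet $\Sigma^2$; transition $\delta$ with $\delta(Id,(i,j))=Id$ iff $i=j$; $\delta(Id,(i,j))=S_{uv}\Rightarrow\delta(Id,(j,i))=S_{vu}$; $\delta(S_{uv},(i,j))=S_{uv}$ if $(i,j)=(v,u)$, else $Exit$. $\mathcal P_{uv}=\{(i,j):\delta(Id,(i,j))=S_{uv}\}$; $i\triangleleft_{uv}j$ iff $(i,j)\in\mathcal P_{uv}$ (iff $j\triangleleft_{vu}i$); $j$ is $uv$-minimal if no $i\triangleleft_{uv}j$, $uv$-maximal if no $j\triangleleft_{uv}k$, $uv$-isolated if both. Gasket automaton: triangle automaton with (Uniqueness) $i\triangleleft_{uv}j,i\triangleleft_{uv}j'\Rightarrow j=j'$; (Gathering) any two of $a\triangleleft_{\alpha\gamma}c$, $a\triangleleft_{\beta\gamma}b$, $b\triangleleft_{\alpha\beta}c$ imply the third; (Boundary) if $\alpha\in\Sigma$ it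 is $\alpha\gamma$- and $\alpha\beta$-minimal; if $\beta\in\Sigma$ it is $\beta\gamma$- and $\beta\alpha$-minimal; if $\gamma\in\Sigma$ it is $\gamma\alpha$- and $\gamma\beta$-minimal. $\gamma$-isolated condition: $\alpha,\beta,\gamma\in\Sigma$; the directed graph $(\Sigma,\mathcal P_{\alpha\gamma}\cup\mathcal P_{\beta\gamma})$ has no directed cycle; $\gamma$ is $\alpha\gamma$-, $\beta\gamma$- and $\alpha\beta$-isolated. *)

(* Defs.v *)
From Stdlib Require Import ZArith.
Open Scope Z_scope.

Inductive state : Type := Id | Exit | Suv (u v : Z).

Definition inSigma (N i : Z) : Prop := 1 <= i <= N.
Definition inLab (N x : Z) : Prop := inSigma N x \/ x = -1 \/ x = -2 \/ x = -3.
Definition corner (al be ga u : Z) : Prop := u = al \/ u = be \/ u = ga.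

Record triangle_automaton (N al be ga : Z) (delta : state -> Z * Z -> state) : Prop := {
  ta_lab : inLab N al /\ inLab N be /\ inLab N ga;
  ta_dist : al <> be /\ be <> ga /\ al <> ga;
  ta_range : forall i j, inSigma N i -> inSigma N j ->
      delta Id (i, j) = Id \/ delta Id (i, j) = Exit \/
      exists u v, corner al be ga u /\ corner al be ga v /\ u <> v /\ delta Id (i, j) = Suv u v;
  ta_id : forall i j, inSigma N i -> inSigma N j -> (delta Id (i, j) = Id <-> i = j);
  ta_sym : forall i j u v, inSigma N i -> inSigma N j ->
      delta Id (i, j) = Suv u v -> delta Id (j, i) = Suv v u;
  ta_S : forall u v i j, corner al be ga u -> corner al be ga v -> u <> v ->
      inSigma N i -> inSigma N j ->
      delta (Suv u v) (i, j) = (if andb (i =? v) (j =? u) then Suv u v else Exit)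
}.

(* i <|_uv j  iff  (i,j) in P_uv *)
Definition tri (N : Z) (delta : state -> Z * Z -> state) (u v i j : Z) : Prop :=
  inSigma N i /\ inSigma N j /\ delta Id (i, j) = Suv u v.

Definition is_min N delta u v j : Prop := forall i, ~ tri N delta u v i j.
Definition is_max N delta u v j : Prop := forall k, ~ tri N delta u v j k.
Definition is_isolated N delta u v j : Prop := is_min N delta u v j /\ is_max N delta u v j.

Record gasket_automaton (N al be ga : Z) (delta : state -> Z * Z -> state) : Prop := {
  ga_tri : triangle_automaton N al be ga delta;
  ga_uniq : forall u v i j j', tri N delta u v i j -> tri N delta u v i j' -> j = j';
  ga_gather : forall a b c,
      (tri N delta al ga a c -> tri N delta be ga a b -> tri N delta al be b c) /\
      (tri N delta al ga a c -> tri N delta al be b c -> tri N delta be ga a b) /\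
      (tri N delta be ga a b -> tri N delta al be b c -> tri N delta al ga a c);
  ga_boundary :
      (inSigma N al -> is_min N delta al ga al /\ is_min N delta al be al) /\
      (inSigma N be -> is_min N delta be ga be /\ is_min N delta be al be) /\
      (inSigma N ga -> is_min N delta ga al ga /\ is_min N delta ga be ga)
}.

Definition has_cycle (E : Z -> Z -> Prop) : Prop :=
  exists (n : nat) (f : nat -> Z), (0 < n)%nat /\ f O = f n /\
    forall k, (k < n)%nat -> E (f k) (f (S k)).

Definition gamma_isolated (N al be ga : Z) (delta : state -> Z * Z -> state) : Prop :=
  inSigma N al /\ inSigma N be /\ inSigma N ga /\
  ~ has_cycle (fun x y => tri N delta al ga x y \/ tri N delta be ga x y) /\
  is_isolated N delta al ga ga /\ is_isolated N delta be ga ga /\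
  is_isolated N delta al be ga.

(* Main.v *)
Require Import Defs.
From Stdlib Require Import ZArith.
From Stdlib Require Import List Lia Classical ClassicalEpsilon.
Import ListNotations.
Open Scope Z_scope.

Lemma acyclic_sink (N : Z) (E : Z -> Z -> Prop) :
  (forall x y, E x y -> inSigma N x /\ inSigma N y) ->
  ~ has_cycle E ->
  forall t0 k0, E t0 k0 -> exists t k, E t k /\ forall k', ~ E k k'.
Proof.
  intros HS Hc t0 k0 H0.
  apply NNPP; intro Hn.
  assert (Hstep : forall t k, E t k -> exists k', E k k').
  { intros t k Ht. apply NNPP; intro Hk. apply Hn. exists t, k. split; auto.
    intros k' Hk'. apply Hk; eauto. }
  set (nxt := fun x => epsilon (inhabits 0) (fun y => E x y)).
  set (f := fix f n := match n with O => k0 | S m => nxt (f m) end).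
  assert (Hf : forall n, E (f n) (f (S n))).
  { induction n.
    - simpl. apply (epsilon_spec (inhabits 0) (fun y => E k0 y)). eauto.
    - change (f (S (S n))) with (nxt (f (S n))).
      apply (epsilon_spec (inhabits 0) (fun y => E (f (S n)) y)). eauto. }
  assert (HfS : forall n, inSigma N (f n)).
  { intro n. apply (HS _ _ (Hf n)). }
  assert (HN : 1 <= N) by (destruct (HS _ _ H0) as [[A B] _]; lia).
  destruct (classic (exists i j, (i < j <= Z.to_nat N)%nat /\ f i = f j)) as [[i [j [Hij Heq]]]|Hno].
  - apply Hc. exists (j - i)%nat, (fun k => f (i + k)%nat). split; [lia|]. split.
    + replace (i + (j - i))%nat with j by lia. rewrite Nat.add_0_r. exact Heq.
    + intros k _. rewrite Nat.add_succ_r. apply Hf.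
  - assert (Hnd : NoDup (map f (seq 0 (S (Z.to_nat N))))).
    { apply NoDup_map_NoDup_ForallPairs; [|apply seq_NoDup].
      intros a b Ha Hb Hab. apply in_seq in Ha. apply in_seq in Hb.
      destruct (Nat.lt_trichotomy a b) as [Hl|[Hl|Hl]]; auto.
      + exfalso; apply Hno; exists a, b; split; [lia|auto].
      + exfalso; apply Hno; exists b, a; split; [lia|auto]. }
    assert (Hinc : incl (map f (seq 0 (S (Z.to_nat N)))) (map Z.of_nat (seq 1 (Z.to_nat N)))).
    { intros x Hx. apply in_map_iff in Hx. destruct Hx as [n [<- _]].
      apply in_map_iff. exists (Z.to_nat (f n)). specialize (HfS n). unfold inSigma in HfS.
      split; [lia|]. apply in_seq. lia. }
    pose proof (NoDup_incl_length Hnd Hinc) as Hl.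
    rewrite !length_map, !length_seq in Hl. lia.
Qed.

Theorem lemma5p2 (N al be ga : Z) (delta : state -> Z * Z -> state) :
  gasket_automaton N al be ga delta ->
  gamma_isolated N al be ga delta ->
  (exists t k, tri N delta al ga t k \/ tri N delta be ga t k) ->
  exists tau kappa,
    (tri N delta al ga tau kappa \/ tri N delta be ga tau kappa) /\
    is_max N delta al ga kappa /\ is_max N delta be ga kappa.
Proof.
  intros _ [_ [_ [_ [Hc _]]]] [t [k Htk]].
  destruct (acyclic_sink N (fun x y => tri N delta al ga x y \/ tri N delta be ga x y))
    with (t0 := t) (k0 := k) as [tau [kappa [H1 H2]]]; auto.
  - intros x y [[A [B _]]|[A [B _]]]; auto.
  - exists tau, kappa. split; auto. split; intros k' Hk'; apply (H2 k'); auto.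
Qed.
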